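(* Let $M$ be a $k\times k$ matrix (for some $k\ge1$) all of whose entries are positive integers, such that $M^2=3M$. Then $M$ is one of $$M_1=(3),\ M_2=\begin{pmatrix}2&1\\2&1\end{pmatrix},\ M_3=\begin{pmatrix}2&2\\1&1\end{pmatrix},\ M_4=\begin{pmatrix}1&1\\2&2\end{pmatrix},\ M_5=\begin{pmatrix}1&2\\1&2\end{pmatrix},\ M_6=\begin{pmatrix}1&1&1\\1&1&1\\1&1&1\end{pmatrix}.$$ *)

(* Defs.v *)
From HB Require Import structures.
From mathcomp Require Import all_boot all_order all_algebra.
Set Implicit Arguments. Unset Strict Implicit. Unset Printing Implicit Defensive.
Import Order.TTheory GRing.Theory Num.Theory.
Local Open Scope ring_scope.

Definition mx_of_rows (n : nat) (s : seq (seq int)) : 'M[int]_n :=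
  \matrix_(i < n, j < n) nth 0 (nth [::] s i) j.

Definition M1 : 'M[int]_1 := mx_of_rows 1 [:: [:: 3]].
Definition M2 : 'M[int]_2 := mx_of_rows 2 [:: [:: 2; 1]; [:: 2; 1]].
Definition M3 : 'M[int]_2 := mx_of_rows 2 [:: [:: 2; 2]; [:: 1; 1]].
Definition M4 : 'M[int]_2 := mx_of_rows 2 [:: [:: 1; 1]; [:: 2; 2]].
Definition M5 : 'M[int]_2 := mx_of_rows 2 [:: [:: 1; 2]; [:: 1; 2]].
Definition M6 : 'M[int]_3 :=
  mx_of_rows 3 [:: [:: 1; 1; 1]; [:: 1; 1; 1]; [:: 1; 1; 1]].

(* Main.v *)
Require Import Defs.
From HB Require Import structures.
From mathcomp Require Import all_boot all_order all_algebra zify ring lra.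
Import Order.TTheory GRing.Theory Num.Theory.
Local Open Scope ring_scope.

Lemma sum2 (F : 'I_2 -> int) : \sum_(l<2) F l = F (inord 0) + F (inord 1).
Proof. by rewrite !big_ord_recr big_ord0 /= add0r; congr (F _ + F _); apply: val_inj; rewrite /= inordK. Qed.
Lemma sum3 (F : 'I_3 -> int) : \sum_(l<3) F l = F (inord 0) + F (inord 1) + F (inord 2).
Proof. by rewrite !big_ord_recr big_ord0 /= add0r; congr (F _ + F _ + F _); apply: val_inj; rewrite /= inordK. Qed.
Lemma ord2 (i : 'I_2) : i = inord 0 \/ i = inord 1.
Proof. case: i => [[|[|//]] H]; [left|right]; apply: val_inj; by rewrite /= inordK. Qed.
Lemma ord3 (i : 'I_3) : i = inord 0 \/ i = inord 1 \/ i = inord 2.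
Proof. case: i => [[|[|[|//]]] H]; [left|right;left|right;right]; apply: val_inj; by rewrite /= inordK. Qed.

Lemma t (a b c d : int) : 0 < a -> 0 < b -> 0 < c -> 0 < d ->
  a*a + b*c = 3*a -> a*b+b*d = 3*b -> c*a+d*c = 3*c -> c*b+d*d = 3*d ->
  (a = 2 /\ b = 1 /\ c = 2 /\ d = 1) \/ (a = 2 /\ b = 2 /\ c = 1 /\ d = 1) \/
  (a = 1 /\ b = 1 /\ c = 2 /\ d = 2) \/ (a = 1 /\ b = 2 /\ c = 1 /\ d = 2).
Proof.
move=> *.
have ha : a <= 2 by nia.
have hd : d <= 2 by nia.
have hb : b <= 2 by nia.
have hc : c <= 2 by nia.
have [?|?] : a = 1 \/ a = 2 by lia.
all: have [?|?] : b = 1 \/ b = 2 by lia.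
all: have [?|?] : c = 1 \/ c = 2 by lia.
all: have [?|?] : d = 1 \/ d = 2 by lia.
all: subst; lia.
Qed.
Lemma q2 (x : int) : 0 <= x*x - 3*x + 2.
Proof. have [h|h] : x <= 1 \/ 2 <= x by lia. all: nia. Qed.
Lemma p1 (x y : int) : 0 < x -> 0 < y -> x <= x * y /\ y <= x * y.
Proof. move=> *; split; nia. Qed.

Lemma t3 (a b c d e f g h i : int) :
  0 < a -> 0 < b -> 0 < c -> 0 < d -> 0 < e -> 0 < f -> 0 < g -> 0 < h -> 0 < i ->
  a*a + b*d + c*g = 3*a -> b*d + e*e + f*h = 3*e -> c*g + f*h + i*i = 3*i ->
  a*b + b*e + c*h = 3*b -> a*c + b*f + c*i = 3*c -> d*c + e*f + f*i = 3 * f ->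
  a = 1 /\ b = 1 /\ c = 1 /\ d = 1 /\ e = 1 /\ f = 1 /\ g = 1 /\ h = 1 /\ i = 1.
Proof.
move=> ha hb hc hd he hf hg hh hi e1 e2 e3 e4 e5 e6.
have := q2 a; have := q2 e; have := q2 i.
have := @p1 b d hb hd; have := @p1 c g hc hg; have := @p1 f h hf hh.
move=> *.
have ? : b = 1 by lia.
have ? : c = 1 by lia.
have ? : d = 1 by lia.
have ? : g = 1 by lia.
have ? : f = 1 by lia.
have ? : h = 1 by lia.
subst.
have ? : a = 1 by lia.
have ? : e = 1 by lia.
have ? : i = 1 by lia.
by subst.
Qed.

Theorem mainTheorem8 (k : nat) (M : 'M[int]_k) :
  (1 <= k)%N ->
  (forall i j : 'I_k, 0 < M i j) ->
  M *m M = 3%:Z *: M ->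
  (exists e : k = 1%N, castmx (e, e) M = M1) \/
  (exists e : k = 2%N, castmx (e, e) M = M2 \/ castmx (e, e) M = M3 \/
                       castmx (e, e) M = M4 \/ castmx (e, e) M = M5) \/
  (exists e : k = 3%N, castmx (e, e) M = M6).
Proof.
move=> hk hpos hM.
have E : forall i j, \sum_l M i l * M l j = 3 * M i j.
  by move=> i j; move/matrixP: hM => /(_ i j); rewrite !mxE.
case: k M hk hpos hM E => [|[|[|[|n]]]] M hk hpos hM E //.
- left; exists erefl; rewrite castmx_id; apply/matrixP => i j.
  have -> : i = ord0 by case: i => [[|//] ?]; apply: val_inj.
  have -> : j = ord0 by case: j => [[|//] ?]; apply: val_inj.
  rewrite !mxE /=.
  have := E ord0 ord0; rewrite big_ord1 => h.
  have := hpos ord0 ord0; nia.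
- right; left; exists erefl; rewrite castmx_id.
  have := E (inord 0) (inord 0); have := E (inord 0) (inord 1);
  have := E (inord 1) (inord 0); have := E (inord 1) (inord 1).
  rewrite !sum2 => e4 e3 e2 e1.
  have := @t (M (inord 0) (inord 0)) (M (inord 0) (inord 1)) (M (inord 1) (inord 0)) (M (inord 1) (inord 1))
    (hpos _ _) (hpos _ _) (hpos _ _) (hpos _ _) e1 e2 e3 e4.
  move=> [[h1 [h2 [h3 h4]]]|[[h1 [h2 [h3 h4]]]|[[h1 [h2 [h3 h4]]]|[h1 [h2 [h3 h4]]]]]];
    [left|right;left|right;right;left|right;right;right];
    apply/matrixP => i j; rewrite !mxE;
    (have [->|->] := ord2 i; have [->|->] := ord2 j); rewrite /= ?inordK //.
- right; right; exists erefl; rewrite castmx_id.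
  have e1 := E (inord 0) (inord 0); have e2 := E (inord 1) (inord 1).
  have e3 := E (inord 2) (inord 2); have e4 := E (inord 0) (inord 1).
  have e5 := E (inord 0) (inord 2); have e6 := E (inord 1) (inord 2).
  rewrite !sum3 in e1 e2 e3 e4 e5 e6.
  have := @t3 (M (inord 0) (inord 0)) (M (inord 0) (inord 1)) (M (inord 0) (inord 2))
     (M (inord 1) (inord 0)) (M (inord 1) (inord 1)) (M (inord 1) (inord 2))
     (M (inord 2) (inord 0)) (M (inord 2) (inord 1)) (M (inord 2) (inord 2))
     (hpos _ _) (hpos _ _) (hpos _ _) (hpos _ _) (hpos _ _) (hpos _ _) (hpos _ _) (hpos _ _) (hpos _ _).
  move=> /(_ ltac:(lia) ltac:(lia) ltac:(lia) ltac:(lia) ltac:(lia) ltac:(lia)).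
  move=> [h1 [h2 [h3 [h4 [h5 [h6 [h7 [h8 h9]]]]]]]].
  apply/matrixP => i j; rewrite !mxE.
  have [->|[->|->]] := ord3 i; have [->|[->|->]] := ord3 j; rewrite /= ?inordK //.
- exfalso.
  have := E ord0 ord0.
  rewrite !big_ord_recl.
  set r := \sum_(i < n) _.
  have hr : 0 <= r by apply: sumr_ge0 => l _; apply: mulr_ge0; apply: ltW.
  have := q2 (M ord0 ord0).
  have := hpos ord0 ord0.
  have := @p1 _ _ (hpos ord0 (lift ord0 ord0)) (hpos (lift ord0 ord0) ord0).
  have := @p1 _ _ (hpos ord0 (lift ord0 (lift ord0 ord0))) (hpos (lift ord0 (lift ord0 ord0)) ord0).
  have := @p1 _ _ (hpos ord0 (lift ord0 (lift ord0 (lift ord0 ord0)))) (hpos (lift ord0 (lift ord0 (lift ord0 ord0))) ord0).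
  have := hpos ord0 (lift ord0 ord0).
  have := hpos ord0 (lift ord0 (lift ord0 ord0)).
  have := hpos ord0 (lift ord0 (lift ord0 (lift ord0 ord0))).
  lia.
Qed.
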